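(* Let $p$ be a prime, let $\Gamma$ be an abelian $p$-group of rank $r$ (written multiplicatively), and suppose that $X\subset\Gamma$ is a union of subgroups of $\Gamma$. Then $\langle X\rangle\subset X^r$.
   Context: The rank of a group is the minimal cardinality of a generating set. $X^r=\{x_1\cdots x_r:x_i\in X\}$ and $\langle X\rangle$ is the subgroup generated by $X$. *)

(* Defs.v *)
From mathcomp Require Import all_boot all_fingroup all_solvable.
Set Implicit Arguments. Unset Strict Implicit. Unset Printing Implicit Defensive.
Local Open Scope group_scope.

Definition grank (gT : finGroupType) (G : {set gT}) : nat :=
  \big[minn/#|G|]_(A : {set gT} | (A \subset G) && (<<A>> == G)) #|A|.

Fixpoint setpow (gT : finGroupType) (X : {set gT}) (n : nat) : {set gT} :=
  if n is n'.+1 then X * setpow X n' else 1.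

(* Main.v *)
Require Import Defs.
From mathcomp Require Import all_boot all_fingroup all_solvable.
Local Open Scope group_scope.

Lemma greedy (gT : finGroupType) (p : nat) (Y : {group gT}) (X : {set gT}) :
  p.-group Y -> X \subset Y -> Y \subset <<X>> ->
  forall n (K : {group gT}), #|Y| - #|K| < n -> K \subset Y ->
  exists2 A : {set gT}, A \subset X & (Y \subset <<A :|: K>>) && (p ^ #|A| <= #|Y : K|).
Proof.
move=> pY sXY sYX; elim=> // n IH K lt sKY.
case: (boolP (Y \subset K)) => [sYK | nsYK].
  exists set0; rewrite ?sub0set // set0U genGid sYK /= cards0 expn0 indexg_gt0.
  by [].
have: ~~ (X \subset K).
  by apply: contra nsYK => sXK; apply: subset_trans sYX _; rewrite gen_subG.
case/subsetPn => x Xx notKx.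
pose K' := <<x |: (K : {set gT})>>%G.
have sK'Y : K' \subset Y by rewrite gen_subG subUset sub1set (subsetP sXY) // sKY.
have sKK' : K \subset K' := subset_trans (subsetUr _ _) (subset_gen _).
have xK' : x \in K' := subsetP (subset_gen _) x (setU11 _ _).
have pKK' : K \proper K' by apply/properP; split => //; exists x.
have ltK : #|Y| - #|K'| < n.
  have h1 := proper_card pKK'; have h2 := subset_leq_card sK'Y.
  rewrite -ltnS; apply: leq_trans lt; exact: (ltn_sub2l (leq_trans h1 h2) h1).
have [A' sA'X /andP [sYA' leA']] := IH K' ltK sK'Y.
exists (x |: A'); first by rewrite subUset sub1set Xx sA'X.
apply/andP; split.
  apply: subset_trans sYA' _; rewrite gen_subG subUset; apply/andP; split.
    apply: subset_trans (subset_gen _).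
    by apply/subsetP=> y; rewrite !inE => ->; rewrite !orbT.
  rewrite gen_subG; apply: subset_trans (subset_gen _).
  by apply/subsetP=> y; rewrite !inE => /orP[]->; rewrite ?orbT.
rewrite -(Lagrange_index sK'Y sKK').
have pn : p.-nat #|K' : K|.
  exact: pnat_dvd (dvdn_indexg K' K) (pgroupS sK'Y pY).
have [k ek] := p_natP pn.
have k0 : 0 < k.
  case: k ek => // ek; move/eqP: ek; rewrite expn0 indexg_eq1 => sK'K.
  by move: pKK'; rewrite properE sK'K andbF.
have p0 : 0 < p by move: (indexg_gt0 K' K); rewrite ek expn_gt0 eqn0Ngt k0 orbF.
rewrite ek; apply: leq_trans (_ : p ^ #|A'| * p ^ k <= _); last first.
  by rewrite leq_mul2r leA' orbT.
rewrite -expnD leq_pexp2l // cardsU1 addnC leq_add2l; case: (x \notin A') k0 => //.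
Qed.

Lemma setpow1 (gT : finGroupType) (X : {set gT}) n : 1 \in X -> 1 \in setpow X n.
Proof.
move=> X1; elim: n => [|n IH] /=; first by rewrite inE.
by rewrite -(mulg1 1) mem_mulg.
Qed.

Lemma setpow_mono (gT : finGroupType) (X : {set gT}) m n :
  1 \in X -> m <= n -> setpow X m \subset setpow X n.
Proof.
move=> X1; elim: n => [|n IH]; first by rewrite leqn0 => /eqP->.
rewrite leq_eqVlt => /orP[/eqP->|]; first by [].
rewrite ltnS => /IH sm; apply: subset_trans sm _.
by apply/subsetP=> y Hy /=; rewrite -(mul1g y) mem_mulg.
Qed.

Lemma gen_in_pow (gT : finGroupType) (Y : {group gT}) (X : {set gT}) :
  abelian Y -> X \subset Y -> 1 \in X ->
  (forall x, x \in X -> <[x]> \subset X) ->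
  forall n (A : {set gT}), A \subset X -> #|A| <= n -> <<A>> \subset setpow X n.
Proof.
move=> cYY sXY X1 cycX; elim=> [|n IH] A sAX.
  by rewrite leqn0 cards_eq0 => /eqP->; rewrite gen0.
move=> leA; case: (set_0Vmem A) => [->|[x Ax]].
  by rewrite gen0 sub1set setpow1.
have defA : A = x |: (A :\ x) by rewrite setD1K.
have sA'X : A :\ x \subset X := subset_trans (subsetDl _ _) sAX.
have leA' : #|A :\ x| <= n by move: leA; rewrite (cardsD1 x A) Ax.
have IH' := IH _ sA'X leA'.
have xX : x \in X := subsetP sAX x Ax.
have sxY : <[x]> \subset Y := subset_trans (cycX x xX) sXY.
have sA'Y : <<A :\ x>> \subset Y by rewrite gen_subG (subset_trans sA'X sXY).
have cx : <[x]> \subset 'C(<<A :\ x>>).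
  exact: subset_trans sxY (subset_trans cYY (centS sA'Y)).
apply: subset_trans (_ : <[x]> <*> <<A :\ x>> \subset _).
  rewrite {1}defA; apply: genS; apply: setUSS; first by rewrite sub1set cycle_id.
  exact: subset_gen.
by rewrite cent_joinEl //= mulgSS ?cycX.
Qed.

Theorem lemma5p5 (gT : finGroupType) (p : nat) (G : {group gT})
    (S : {set {group gT}}) (X : {set gT}) :
  prime p -> p.-group G -> abelian G ->
  S != set0 -> (forall H : {group gT}, H \in S -> H \subset G) ->
  X = \bigcup_(H in S) (H : {set gT}) ->
  <<X>> \subset setpow X (grank G).
Proof.
move=> pr pG cGG S0 sSG defX.
have sXG : X \subset G by rewrite defX; apply/bigcupsP => H /sSG.
have X1 : 1 \in X.
  by case/set0Pn: S0 => H HS; rewrite defX; apply/bigcupP; exists H => //; apply: group1.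
have cycX : forall x, x \in X -> <[x]> \subset X.
  move=> x; rewrite defX => /bigcupP[H HS Hx]; apply: subset_trans (bigcup_sup H HS).
  by rewrite cycle_subG.
pose Y := <<X>>%G.
have sYG : Y \subset G by rewrite gen_subG.
have pY : p.-group Y := pgroupS sYG pG.
have cYY : abelian Y := abelianS sYG cGG.
have sXY : X \subset Y := subset_gen X.
have [A sAX /andP [sYA leA]] :=
  @greedy _ p _ _ pY sXY (subxx _) _ _ (ltnSn (#|Y| - #|'Phi(Y)|)) (Phi_sub Y).
have defY : <<A>> = Y.
  apply: Phi_nongen; apply/eqP; rewrite eqEsubset; apply/andP; split.
    by rewrite join_subG Phi_sub /= (subset_trans sAX sXY).
  by apply: subset_trans sYA _; rewrite setUC.
have cardA : #|A| <= grank G.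
  have hab := Phi_quotient_abelem pY.
  have e1 : #|Y : 'Phi(Y)| = (p ^ 'r(Y / 'Phi(Y)))%N.
    rewrite -card_quotient ?normal_norm ?Phi_normal // (rank_abelem hab).
    by apply: card_pgroup; case/and3P: hab.
  have r1 : 'r(Y / 'Phi(Y)) <= 'r(G).
    exact: leq_trans (quotient_rank_abelian _ cYY) (rankS sYG).
  have r2 : 'r(G) <= grank G.
    rewrite -grank_abelian // /grank.
    apply: (big_rec (fun x => 'm(G) <= x)).
      by have := grank_min G; rewrite genGid.
    move=> B y /andP[_ /eqP <-] hy; rewrite leq_min hy andbT.
    exact: grank_min.
  have := leA; rewrite e1 leq_exp2l ?prime_gt1 // => h.
  exact: leq_trans h (leq_trans r1 r2).
rewrite -defY.
exact: gen_in_pow cYY sXY X1 cycX _ _ sAX cardA.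
Qed.
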